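(* Let $s,t,D\ge1$ be integers and let $\mathcal G=\{G_1,\dots,G_t\}$ be an $s$-joined graph family on $n$ vertices. Let $\mathcal H$ be a rooted $[t]$-edge-colored graph with $\Delta^{mon}(\mathcal H)\le D$ and $|V(\mathcal H)|\le n-2sD-3s$, and let $\mathcal H_0$ be a rooted subgraph obtained from $\mathcal H$ by successively removing non-root vertices of degree $1$ (roots unchanged). If $\phi_0:\mathcal H_0\hookrightarrow\mathcal G$ is a $(2s,D)$-good embedding, then there is a $(2s,D)$-good embedding $\phi:\mathcal H\hookrightarrow\mathcal G$ extending $\phi_0$.
   Context: A graph family $\mathcal G=\{G_1,\dots,G_t\}$ is a collection of $t$ simple graphs on a common finite vertex set $V$, $n=|V|$. For $X\subseteq V\times[t]$, $\Gamma_{\mathcal G}(X)=\bigcup_{(v,i)\in X}\{u\in V:uv\in E(G_i)\}$. The family is $s$-joined if for all $X\subseteq V\times[t]$ and $Y\subseteq V$ with $|X|\ge s$ and $|Y|\ge s$ there exist $(v,i)\in X$ and $y\in Y$ with $vy\in E(G_i)$. A $[t]$-edge-colored graph $\mathcal H$ is a simple graph with each edge colored in $[t]$; $H_i$ is its spanning subgraph of color-$i$ edges, $\deg_{H_i}(h)$ the number of color-$i$ edges at $h$, and $\Delta^{mon}(\mathcal H)=\max_i\max_h\deg_{H_i}(h)$. An embedding $\phi:\mathcal H\hookrightarrow\mathcal G$ is an injective map $V(\mathcal H)\to V$ with $\phi(x)\phi(y)\in E(G_i)$ for every edge $xy$ of color $i$. A rooted $[t]$-edge-colored graph is one with a distinguished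 set of roots such that, after deleting all edges with both ends roots, every connected component is a tree containing exactly one root; for a non-root $h$ the unique path from $h$ to the root set (meeting it only at its last vertex) determines the parent of $h$ (its neighbour on the path) and $c(h)$, the color of the edge from $h$ to its parent. For fixed $D$: $P_\phi(\mathcal H)=\{(\phi(h),c(h)):h\text{ non-root}\}$ and, for $X\subseteq V\times[t]$, $R(X,\phi)=|\Gamma_{\mathcal G}(X)\setminus\phi(V(\mathcal H))|-\sum_{(v,i)\in X}[D-\deg_{H_i}(\phi^{-1}(v))]-|P_\phi(\mathcal H)\cap X|$, with $\deg_{H_i}(\phi^{-1}(v))=0$ if $v\notin\phi(V(\mathcal H))$. The embedding $\phi$ is $(s,D)$-good if $R(X,\phi)\ge0$ for every $X\subseteq V\times[t]$ with $|X|\le s$. An embedding of $\mathcal H$ extends $\phi_0$ if it agrees with $\phi_0$ on $V(\mathcal H_0)$. *)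

(* Defs.v *)
From mathcomp Require Import all_boot all_order all_algebra.
From mathcomp Require Import boolp.
Set Implicit Arguments. Unset Strict Implicit. Unset Printing Implicit Defensive.
Import GRing.Theory Num.Theory.

Section Defs.
Variables (t : nat) (V W : finType).

(** Graph family: G i is the edge relation of G_(i+1) on the common vertex set V. *)
Definition simple_family (G : 'I_t -> rel V) : Prop :=
  forall i, symmetric (G i) /\ irreflexive (G i).

Definition Gamma (G : 'I_t -> rel V) (X : {set V * 'I_t}) : {set V} :=
  [set u | [exists x in X, G x.2 x.1 u]].

Definition s_joined (s : nat) (G : 'I_t -> rel V) : Prop :=
  forall (X : {set V * 'I_t}) (Y : {set V}), s <= #|X| -> s <= #|Y| ->
    exists2 x, x \in X & exists2 y, y \in Y & G x.2 x.1 y.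

(** A [t]-edge-colored simple graph on W: col x y = Some i iff xy is an edge
    of colour i; None iff no edge. *)
Definition colored_simple (col : W -> W -> option 'I_t) : Prop :=
  (forall x y, col x y = col y x) /\ (forall x, col x x = None).

(** Everything below is relative to a vertex subset S of W: the colored graph
    considered is the one induced on S (S = setT for H itself). *)
Variable col : W -> W -> option 'I_t.

Definition degc (S : {set W}) (i : 'I_t) (h : W) : nat :=
  #|[set y in S | col h y == Some i]|.

Definition deg (S : {set W}) (h : W) : nat :=
  #|[set y in S | col h y != None]|.

Definition redge (S R : {set W}) : rel W :=
  fun x y => [&& x \in S, y \in S, col x y != None & ~~ ((x \in R) && (y \in R))].

Definition rooted (S R : {set W}) : Prop :=
  [/\ R \subset S,
      (forall c : seq W, uniq c -> 3 <= size c -> ~~ cycle (redge S R) c)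
    & (forall x, x \in S -> exists! r, r \in R /\ connect (redge S R) x r)].

Definition root_path (S R : {set W}) (h : W) (p : seq W) : bool :=
  [&& path (redge S R) h p, uniq (h :: p), last h p \in R
    & all (fun x => x \notin R) (belast h p)].

Inductive pruned (R : {set W}) : {set W} -> Prop :=
  | pruned_all : pruned R setT
  | pruned_step S v : pruned R S -> v \in S -> v \notin R -> deg S v = 1 ->
      pruned R (S :\ v).

Definition embedding (G : 'I_t -> rel V) (S : {set W}) (phi : W -> V) : Prop :=
  {in S &, injective phi} /\
  (forall x y i, x \in S -> y \in S -> col x y = Some i -> G i (phi x) (phi y)).

Definition deginv (S : {set W}) (phi : W -> V) (i : 'I_t) (v : V) : nat :=
  match [pick h in S | phi h == v] with Some h => degc S i h | None => 0 end.

(** P_phi(H) = {(phi(h), c(h)) : h non-root} *)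
Definition Pset (S R : {set W}) (phi : W -> V) : {set V * 'I_t} :=
  [set x : V * 'I_t | `[< exists h p0 p, [/\ h \in S, h \notin R,
        root_path S R h (p0 :: p), col h p0 = Some x.2 & phi h = x.1] >]].

Definition Rval (G : 'I_t -> rel V) (D : nat) (S R : {set W}) (phi : W -> V)
  (X : {set V * 'I_t}) : int :=
  (#|Gamma G X :\: phi @: S|%:Z
   - \sum_(x in X) (D%:Z - (deginv S phi x.2 x.1)%:Z)
   - #|Pset S R phi :&: X|%:Z)%R.

Definition good (G : 'I_t -> rel V) (s D : nat) (S R : {set W}) (phi : W -> V) : Prop :=
  forall X : {set V * 'I_t}, #|X| <= s -> (0 <= Rval G D S R phi X)%R.

End Defs.

(* Main.v *)
Require Import Defs.
From mathcomp Require Import all_boot all_order all_algebra.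
From mathcomp Require Import boolp.
From mathcomp Require Import zify.
Set Implicit Arguments. Unset Strict Implicit. Unset Printing Implicit Defensive.
Import GRing.Theory Num.Theory.

Lemma Posz_sum (I : finType) (A : {pred I}) (F : I -> nat) :
  ((\sum_(i in A) F i)%N%:Z = \sum_(i in A) (F i)%:Z)%R.
Proof. by apply: (big_morph Posz PoszD). Qed.

Lemma cardI_sum (T : finType) (P X : {set T}) :
  #|P :&: X| = \sum_(x in X) (x \in P).
Proof.
rewrite (big_setID P) /= [X in _ + X]big1 ?addn0; last by move=> x; rewrite inE => /andP[/negbTE ->].
rewrite -sum1_card setIC; apply: eq_bigr => x; rewrite inE => /andP[_ ->].
by [].
Qed.

Definition gw t (V W : finType) (col : W -> W -> option 'I_t) D S R (phi : W -> V)
  (x : V * 'I_t) : int :=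
  (D%:Z - (deginv col S phi x.2 x.1)%:Z + ((x \in Pset col S R phi) : nat)%:Z)%R.

Lemma Rval_gw t (V W : finType) (col : W -> W -> option 'I_t) G D S R (phi : W -> V) X :
  Rval col G D S R phi X =
  (#|Gamma G X :\: phi @: S|%:Z - \sum_(x in X) gw col D S R phi x)%R.
Proof.
rewrite /Rval /gw [X in _ = (_ - X)%R]big_split /= cardI_sum Posz_sum.
by rewrite opprD addrA.
Qed.
Lemma sumUI (T:finType) (F : T -> int) (X Y : {set T}) :
  (\sum_(x in X:|:Y) F x + \sum_(x in X:&:Y) F x = \sum_(x in X) F x + \sum_(x in Y) F x)%R.
Proof.
rewrite (big_setID X (A := X :|: Y)) [in RHS](big_setID X (A := Y)) /=.
rewrite setUK setDUl setDv set0U (setIC X Y).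
by rewrite -addrA [X in (_ + X)%R]addrC.
Qed.

Lemma Gamma_U t (V : finType) (G : 'I_t -> rel V) (X Y : {set V * 'I_t}) :
  Gamma G (X :|: Y) = Gamma G X :|: Gamma G Y.
Proof.
apply/setP=> u; rewrite !inE; apply/idP/idP.
- case/existsP=> x /andP[]; rewrite inE => /orP[xX|xX] Gx; apply/orP; [left|right];
  by apply/existsP; exists x; rewrite xX.
- case/orP=> /existsP[x /andP[xX Gx]]; apply/existsP; exists x; by rewrite inE xX ?orbT.
Qed.

Lemma Gamma_sub t (V : finType) (G : 'I_t -> rel V) (X Y : {set V * 'I_t}) :
  X \subset Y -> Gamma G X \subset Gamma G Y.
Proof.
move=> sXY; apply/subsetP=> u; rewrite !inE => /existsP[x /andP[xX Gx]].
by apply/existsP; exists x; rewrite (subsetP sXY).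
Qed.

Lemma Gamma_card_submod t (V : finType) (G : 'I_t -> rel V) (A : {set V}) (X Y : {set V * 'I_t}) :
  #|Gamma G (X :|: Y) :\: A| + #|Gamma G (X :&: Y) :\: A| <=
  #|Gamma G X :\: A| + #|Gamma G Y :\: A|.
Proof.
rewrite -(cardsUI (Gamma G X :\: A)) Gamma_U setDUl leq_add2l; apply: subset_leq_card.
apply/subsetP=> u; rewrite !in_setD => /andP[uA uG]; rewrite in_setI !in_setD uA /=.
by apply/andP; split; apply: (subsetP (Gamma_sub G _)) uG; [apply: subsetIl|apply: subsetIr].
Qed.

Lemma Rval_submod t (V W : finType) (col : W -> W -> option 'I_t) G D S R (phi : W -> V)
  (X Y : {set V * 'I_t}) :
  (Rval col G D S R phi (X :|: Y) + Rval col G D S R phi (X :&: Y) <=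
   Rval col G D S R phi X + Rval col G D S R phi Y)%R.
Proof.
rewrite !Rval_gw.
have H1 := Gamma_card_submod G (phi @: S) X Y.
have H2 := sumUI (gw col D S R phi) X Y.
rewrite addrACA [in X in (_ <= X)%R]addrACA -!opprD H2 lerD2r -!PoszD lez_nat.
exact: H1.
Qed.

Lemma Rval_big t (V W : finType) (col : W -> W -> option 'I_t) G s D S R (phi : W -> V)
  (X : {set V * 'I_t}) :
  s_joined s G -> #|W| + 2 * s * D + 3 * s <= #|V| -> s <= #|X| -> #|X| <= 2 * s ->
  (0 < Rval col G D S R phi X)%R.
Proof.
move=> sj hn h1 h2; rewrite Rval_gw.
have Hg : (\sum_(x in X) gw col D S R phi x <= ((D + 1) * #|X|)%N%:Z)%R.
  have -> : (((D + 1) * #|X|)%N%:Z = \sum_(x in X) (D + 1)%N%:Z)%R.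
    by rewrite sumr_const -mulr_natr natz -PoszM.
  apply: ler_sum => x _; rewrite /gw.
  case: (x \in Pset _ _ _ _) => /=; lia.
have HC : #|~: Gamma G X| < s.
  rewrite ltnNge; apply/negP => hC.
  have [x xX [y]] := sj X _ h1 hC.
  by rewrite inE => /negP yG Gy; apply: yG; rewrite inE; apply/existsP; exists x; rewrite xX.
have HV := cardsC (Gamma G X).
have HD := cardsD (Gamma G X) (phi @: S).
have HI : #|Gamma G X :&: phi @: S| <= #|W|.
  apply: (leq_trans (subset_leq_card (subsetIr _ _))).
  by apply: (leq_trans (leq_imset_card _ _)); apply: max_card.
have HX : (D + 1) * #|X| <= (D + 1) * (2 * s) by rewrite leq_mul2l h2 orbT.
lia.
Qed.
Lemma deginv_img t (V W : finType) (col : W -> W -> option 'I_t) (S : {set W}) (phi : W -> V) (i : 'I_t) h :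
  {in S &, injective phi} -> h \in S -> deginv col S phi i (phi h) = degc col S i h.
Proof.
move=> inj hS; rewrite /deginv; case: pickP => [h' /andP[h'S /eqP e]|none].
  by rewrite (inj _ _ h'S hS e).
by have := none h; rewrite hS eqxx.
Qed.

Lemma deginv_out t (V W : finType) (col : W -> W -> option 'I_t) (S : {set W}) (phi : W -> V) (i : 'I_t) v :
  v \notin phi @: S -> deginv col S phi i v = 0.
Proof.
move=> nv; rewrite /deginv; case: pickP => [h' /andP[h'S /eqP e]|//].
by move: nv; rewrite -e (imset_f phi h'S).
Qed.

Lemma degc_grow t (W : finType) (col : W -> W -> option 'I_t) (S : {set W}) h (j : 'I_t) q :
  h \notin S -> degc col (h |: S) j q = degc col S j q + (col q h == Some j).
Proof.
move=> hS; rewrite /degc; case E: (col q h == Some j).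
  have -> : [set y in h |: S | col q y == Some j] = h |: [set y in S | col q y == Some j].
    apply/setP=> y; rewrite !inE; case: (eqVneq y h) => [->|] //=; by rewrite E.
  by rewrite cardsU1 inE (negbTE hS) addnC.
have -> : [set y in h |: S | col q y == Some j] = [set y in S | col q y == Some j].
  apply/setP=> y; rewrite !inE; case: (eqVneq y h) => [->|] //=; by rewrite E (negbTE hS).
by rewrite addn0.
Qed.

Lemma avoid_leaf t (W : finType) (col : W -> W -> option 'I_t) (S0 R : {set W}) h p h0 q :
  colored_simple col -> h \notin R -> (forall y, y \in S0 -> col h y != None -> y = p) ->
  h0 != h -> root_path col S0 R h0 q -> h \notin q.
Proof.
move=> [csym _] hR nb nh /and4P[pth un lst _]; apply/negP => hq.
move: pth un lst; case/splitPr: hq => s1 s2.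
case: s2 => [|z s2].
  by rewrite last_cat /= => _ _ hR'; move: hR; rewrite hR'.
rewrite cat_path /= => /and4P[_ /and4P[lS _ c1 _] /and4P[_ zS c2 _] _].
move=> /andP[h0n]; rewrite cat_uniq => /and3P[_ hs _] _.
have e1 : last h0 s1 = p by apply: (nb (last h0 s1) lS); rewrite csym.
have e2 : z = p by exact: (nb z zS c2).
have := mem_last h0 s1; rewrite in_cons e1 -e2 => /orP[/eqP ez|zs1].
  by move: h0n; rewrite -ez mem_cat !inE eqxx !orbT.
by move: hs; rewrite /= zs1 orbT.
Qed.

Lemma Pset_leaf t (V W : finType) (col : W -> W -> option 'I_t) (S0 R : {set W}) h p (i : 'I_t) (phi phi' : W -> V) :
  colored_simple col -> h \notin R -> (forall y, y \in S0 -> col h y != None -> y = p) ->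
  col h p = Some i -> (forall x, x != h -> phi' x = phi x) ->
  Pset col S0 R phi' \subset (phi' h, i) |: Pset col (S0 :\ h) R phi.
Proof.
move=> cs hR nb chp ephi.
apply/subsetP => [[a j]]; rewrite !inE => /asboolP [h0 [p0 [q [h0S h0R rp ch e]]]].
case: (eqVneq h0 h) => [eh|nh].
  move: rp ch e; rewrite eh => /and4P[/= /andP[/and4P[_ p0S cp0 _] _] _ _ _].
  rewrite (nb _ p0S cp0) chp => -[<-] <-; by rewrite eqxx.
apply/orP; right; apply/asboolP; exists h0, p0, q; split => //.
- by rewrite in_setD1 nh.
- have hq := avoid_leaf cs hR nb nh rp.
  move: rp => /and4P[pth un lst al]; rewrite /root_path un lst al !andbT.
  apply: (sub_in_path (P := predC1 h)) pth.
    move=> x y xh yh; move: xh yh; rewrite !inE => xh yh /and4P[xS yS cxy rr]; by rewrite /redge !in_setD1 xh yh xS yS cxy rr.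
  apply/allP => x; rewrite inE => /orP[/eqP ->|xq] /=; first exact: nh.
  by apply/eqP => exh; move: hq; rewrite -exh xq.
- by rewrite -(ephi _ nh).
Qed.

Ltac clia := repeat match goal with x := _ |- _ => subst x end; repeat match goal with H : _ |- _ => clear H end; lia.

Lemma arith1 (g1 g0 : nat) (gu su : int) :
  (0 <= g1%:Z - (gu + su))%R -> (g0%:Z - su = 0)%R -> g1 <= g0 -> (1 <= gu)%R -> False.
Proof. lia. Qed.

Lemma sum_ind (T : finType) (X : {set T}) a :
  (\sum_(x in X) ((x == a) : nat)%:Z = ((a \in X) : nat)%:Z)%R.
Proof.
case: (boolP (a \in X)) => aX.
  rewrite (bigD1 a) //= eqxx big1 ?addr0 // => x /andP[_ /negbTE ->] //.
rewrite big1 // => x xX; have /negbTE -> // : x != a.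
by apply/eqP => e; move: aX; rewrite -e xX.
Qed.

Lemma leaf_step t (V W : finType) (G : 'I_t -> rel V) (col : W -> W -> option 'I_t)
  (R S0 : {set W}) (s D : nat) h (phi : W -> V) :
  1 <= s -> simple_family G -> s_joined s G -> colored_simple col ->
  (forall i q, degc col S0 i q <= D) ->
  #|W| + 2 * s * D + 3 * s <= #|V| ->
  h \in S0 -> h \notin R -> deg col S0 h = 1 ->
  embedding col G (S0 :\ h) phi -> good col G (2 * s) D (S0 :\ h) R phi ->
  exists phi' : W -> V, [/\ embedding col G S0 phi',
     (forall x, x \in S0 :\ h -> phi' x = phi x) & good col G (2 * s) D S0 R phi'].
Proof.
move=> hs sG sj cs hdeg hn hS0 hR hd [inj edg] gd.
set S := S0 :\ h.
have hS : h \notin S by rewrite !inE eqxx.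
have eS0 : S0 = h |: S by rewrite setD1K.
have [p Ep] : exists p, [set y in S0 | col h y != None] = [set p].
  by apply/cards1P; apply/eqP; exact: hd.
have pin : p \in [set y in S0 | col h y != None] by rewrite Ep set11.
move: pin; rewrite inE => /andP[pS0 cp].
have nb : forall y, y \in S0 -> col h y != None -> y = p.
  by move=> y yS cy; apply/set1P; rewrite -Ep inE yS cy.
have [csym cirr] := cs.
case Ei : (col h p) cp => [i|] // _.
have ph : p != h by apply/eqP => e; move: Ei; rewrite e cirr.
have pS : p \in S by rewrite in_setD1 ph pS0.
have cph : col p h = Some i by rewrite csym.
set u := phi p.
set A := phi @: S.
have uA : u \in A by apply: imset_f.
have degp : degc col S i p < D.
  by have := hdeg i p; rewrite eS0 degc_grow // cph eqxx addn1.
set Rv := Rval col G D S R phi.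
have Rv0 : Rv set0 = 0%R.
  rewrite /Rv Rval_gw big_set0.
  have -> : Gamma G set0 = set0.
    by apply/setP=> y; rewrite !inE; apply/negbTE/existsP => -[x]; rewrite inE.
  by rewrite set0D cards0.
set crit := fun X : {set V * 'I_t} => [&& Rv X == 0%R, #|X| <= 2 * s & (u, i) \notin X].
have c0 : crit set0 by rewrite /crit Rv0 eqxx cards0 in_set0.
have small : forall X, Rv X = 0%R -> #|X| <= 2 * s -> #|X| < s.
  move=> X e hX; rewrite ltnNge; apply/negP => hsX.
  have := @Rval_big _ _ _ col G s D S R phi X sj hn hsX hX; rewrite -/Rv e; clia.
case: (@arg_maxnP _ set0 crit (fun X : {set V * 'I_t} => #|X|) c0) => X0 cX0 maxX0.
move: cX0 => /and3P[/eqP R0 X0s uX0].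
have X0small := small X0 R0 X0s.
have maxc : forall Y, Rv Y = 0%R -> #|Y| <= 2 * s -> (u, i) \notin Y -> Y \subset X0.
  move=> Y RY Ys uY.
  have Ysmall := small Y RY Ys.
  have hU := cardsUI X0 Y.
  have Us : #|X0 :|: Y| <= 2 * s by move: hU Ysmall X0small; clia.
  have Is : #|X0 :&: Y| <= 2 * s by move: hU Ysmall X0small; clia.
  have sub := Rval_submod col G D S R phi X0 Y.
  have g1 := gd _ Us; have g2 := gd _ Is.
  have RU : Rv (X0 :|: Y) = 0%R.
    move: sub g1 g2; rewrite -!/(Rv _) R0 RY; clia.
  have cU : crit (X0 :|: Y) by rewrite /crit RU eqxx Us in_setU negb_or uX0 uY.
  have le := maxX0 _ cU.
  have eU : X0 :|: Y = X0 by apply/eqP; rewrite eq_sym eqEcard subsetUl; exact: le.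
  by rewrite -eU subsetUr.
set X1 := (u, i) |: X0.
have X1s : #|X1| <= 2 * s.
  rewrite cardsU1 uX0 /= add1n; apply: leq_trans X0small _; by rewrite mul2n -addnn leq_addr.
have g1 := gd _ X1s.
have [w /andP[wD wn]] : exists w, (w \in Gamma G X1 :\: A) && (w \notin Gamma G X0).
  case: (boolP [exists w, (w \in Gamma G X1 :\: A) && (w \notin Gamma G X0)]).
    by move=> /existsP.
  move=> /existsPn Hn; exfalso.
  have sub : Gamma G X1 :\: A \subset Gamma G X0 :\: A.
    apply/subsetP => y yD; have := Hn y; rewrite yD /= negbK => yG.
    by move: yD; rewrite !in_setD yG => /andP[-> _].
  have cs' := subset_leq_card sub.
  have gu : (1 <= gw col D S R phi (u, i))%R.
    rewrite /gw /= /u deginv_img //; case: (_ \in _) => /=; move: degp; clia.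
  move: g1 R0 cs' gu; rewrite /Rv !Rval_gw (big_setU1 _ uX0) /=; exact: arith1.
move: wD; rewrite in_setD => /andP[wA wG1].
have Guw : G i u w.
  move: wG1; rewrite inE => /existsP[x /andP[]]; rewrite in_setU1 => /orP[/eqP -> //|xX0] Gx.
  by move/negP: wn; case; rewrite inE; apply/existsP; exists x; rewrite xX0.
set phi' := fun x => if x == h then w else phi x.
have ephi : forall x, x != h -> phi' x = phi x by move=> x /negbTE; rewrite /phi' => ->.
have phih : phi' h = w by rewrite /phi' eqxx.
have inj' : {in S0 &, injective phi'}.
  move=> x y xS yS; rewrite /phi'.
  case: (eqVneq x h) => [->|xh]; case: (eqVneq y h) => [->|yh] //.
  - move=> e; move/negP: wA; case; rewrite e; apply: imset_f; by rewrite in_setD1 yh.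
  - move=> e; move/negP: wA; case; rewrite -e; apply: imset_f; by rewrite in_setD1 xh.
  - by apply: inj; rewrite in_setD1 ?xh ?yh.
have emb' : embedding col G S0 phi'.
  split => // x y j xS yS cxy.
  case: (eqVneq x h) => [exh|xh].
    subst x; have ey := nb y yS ltac:(by rewrite cxy); subst y.
    move: cxy; rewrite Ei => -[<-]; rewrite phih ephi //.
    by rewrite ((sG i).1).
  case: (eqVneq y h) => [eyh|yh].
    subst y; have ex := nb x xS ltac:(by rewrite csym cxy); subst x.
    by move: cxy; rewrite cph => -[<-]; rewrite phih ephi.
  by rewrite !ephi //; apply: edg => //; rewrite in_setD1 ?xh ?yh.
exists phi'; split => //.
  by move=> x; rewrite in_setD1 => /andP[xh _]; exact: ephi.
move=> X hX.
have sA : forall y, y \in phi' @: S0 -> (y == w) || (y \in A).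
  move=> y /imsetP[x xS ->]; case: (eqVneq x h) => [->|xh]; first by rewrite phih eqxx.
  by rewrite ephi // (imset_f phi) ?orbT // in_setD1 xh.
have Ha : #|Gamma G X :\: A| <= (w \in Gamma G X) + #|Gamma G X :\: phi' @: S0|.
  case: (boolP (w \in Gamma G X)) => wX.
    apply: (leq_trans (subset_leq_card (_ : _ \subset w |: (Gamma G X :\: phi' @: S0)))).
      apply/subsetP => y; rewrite in_setD => /andP[yA yG].
      rewrite in_setU1 in_setD yG andbT; case: (eqVneq y w) => //= yw.
      by apply/negP => /sA; rewrite (negbTE yw) (negbTE yA).
    by rewrite cardsU1 leq_add2r leq_b1.
  rewrite add0n; apply: subset_leq_card; apply/subsetP => y; rewrite !in_setD => /andP[yA yG].
  rewrite yG andbT; apply/negP => /sA; case: eqVneq => [eyw|] /=.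
    by move: wX; rewrite -eyw yG.
  by rewrite (negbTE yA).
have PP := Pset_leaf (phi := phi) cs hR nb Ei ephi; rewrite phih in PP.
have PA : forall x, x \in Pset col S R phi -> x.1 \in A.
  move=> [a j]; rewrite inE => /asboolP[h0 [p0 [q [h0S _ _ _ <-]]]]; exact: imset_f.
have Hb : forall x, (gw col D S0 R phi' x + ((x == (u, i)) : nat)%:Z <= gw col D S R phi x)%R.
  move=> [y j]; rewrite /gw /=.
  have Pb : ((y, j) \in Pset col S0 R phi') <= ((y == w) && (j == i)) || ((y, j) \in Pset col S R phi).
    case: (boolP (_ \in Pset col S0 R phi')) => // Hin; move: (subsetP PP _ Hin).
    by rewrite in_setU1 xpair_eqE; case: (_ || _).
  case: (boolP (y \in A)) => yA.
    case/imsetP: yA => q qS ey.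
    have qh : q != h by apply/eqP=> e; move: hS; rewrite -e qS.
    have qS0 : q \in S0 by move: qS; rewrite in_setD1 => /andP[_].
    have yw : (y == w) = false by apply/negbTE/eqP => e; move/negP: wA; apply; rewrite -e ey imset_f.
    rewrite yw /= in Pb.
    rewrite ey -{1}(ephi q qh) (deginv_img _ _ inj') // (deginv_img _ _ inj) //.
    have dg := degc_grow col j q hS; rewrite -eS0 in dg; rewrite dg.
    rewrite xpair_eqE /u (inj_in_eq inj qS pS).
    have hc : ((q == p) && (j == i)) <= (col q h == Some j).
      by case: eqVneq => [->|] //=; case: eqVneq => [->|] //=; rewrite cph eqxx.
    rewrite -ey; move: Pb hc.
    case: (_ \in Pset col S0 R phi'); case: (_ \in Pset col S R phi);
    case: ((q == p) && (j == i)); case: (col q h == Some j) => //= _ _; clia.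
  have yu : ((y, j) == (u, i)) = false.
    by apply/negbTE/eqP => -[e _]; move: yA; rewrite e uA.
  have yP : ((y, j) \in Pset col S R phi) = false.
    by apply/negbTE/negP => /PA /=; rewrite (negbTE yA).
  rewrite yu yP (deginv_out _ _ yA) /= in Pb *.
  case: (eqVneq y w) => [eyw|nyw].
    rewrite eyw -phih (deginv_img _ _ inj') // phih.
    have dj : (j == i) <= degc col S0 j h.
      case: eqVneq => [->|] //=; rewrite /degc card_gt0; apply/set0Pn; exists p.
      by rewrite inE Ei eqxx andbT.
    move: Pb dj; rewrite eyw eqxx /=.
    case: (_ \in Pset col S0 R phi'); case: (j == i) => //= _; clia.
  rewrite deginv_out; last by apply/negP => /sA; rewrite (negbTE nyw) (negbTE yA).
  move: Pb; rewrite (negbTE nyw) /=; case: (_ \in Pset col S0 R phi') => //= _; clia.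
have Hs : (\sum_(x in X) gw col D S0 R phi' x + (((u, i) \in X) : nat)%:Z <=
           \sum_(x in X) gw col D S R phi x)%R.
  by rewrite -sum_ind -big_split /=; apply: ler_sum => x _; exact: Hb.
have RvX := gd X hX.
rewrite Rval_gw; move: RvX; rewrite Rval_gw => RvX.
case: (boolP ((u, i) \in X)) => uX.
  move: Hs Ha RvX; rewrite uX; case: (w \in Gamma G X) => /=; clia.
case: (boolP (w \in Gamma G X)) => wX; last first.
  by move: Hs Ha RvX; rewrite (negbTE uX) (negbTE wX) /=; clia.
have nz : Rv X != 0%R.
  apply/eqP => e; have sX := maxc X e hX uX.
  by move/negP: wn; apply; exact: (subsetP (Gamma_sub G sX) _ wX).
move: nz Hs Ha RvX; rewrite /Rv Rval_gw (negbTE uX) wX /= => /eqP nz; move: nz; clia.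
Qed.

Unset Implicit Arguments.

Theorem lemma2p9 (s t D : nat) (V : finType) (G : 'I_t -> rel V)
  (W : finType) (col : W -> W -> option 'I_t) (R S : {set W}) (phi0 : W -> V) :
  1 <= s -> 1 <= t -> 1 <= D ->
  simple_family G -> s_joined s G ->
  colored_simple col -> rooted col setT R ->
  (forall (i : 'I_t) (h : W), degc col setT i h <= D) ->
  #|W| + 2 * s * D + 3 * s <= #|V| ->
  pruned col R S ->
  embedding col G S phi0 ->
  good col G (2 * s) D S R phi0 ->
  exists phi : W -> V,
    [/\ embedding col G setT phi,
        (forall x, x \in S -> phi x = phi0 x)
      & good col G (2 * s) D setT R phi].
Proof.
move=> hs ht hD sG sj cs _ hdeg hn hpr.
elim: hpr phi0 => [|S' v hpr IH vS vR dv] phi0 emb gd.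
  by exists phi0; split.
have hdegS : forall i q, degc col S' i q <= D.
  move=> i q; apply: leq_trans (hdeg i q); apply: subset_leq_card.
  by apply/subsetP => y; rewrite !inE => /andP[_ ->]; rewrite andbT.
have [phi1 [emb1 agr1 gd1]] := leaf_step hs sG sj cs hdegS hn vS vR dv emb gd.
have [phi [e2 a2 g2]] := IH phi1 emb1 gd1.
exists phi; split => // x xS.
by rewrite a2 ?agr1 //; move: xS; rewrite in_setD1 => /andP[_].
Qed.
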